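(* Let $0<\kappa<1$. For $\phi$ near $0$ define $$u(\phi)=\int_0^{\phi} F\!\left(\tfrac14,\tfrac34;\tfrac12;\kappa^2\sin^2\theta\right)\,\mathrm{d}\theta ,$$ let $u\mapsto\phi(u)$ be the local inverse near $0$ with $\phi(0)=0$, let $\psi=\psi(u)$ be defined near $u=0$ with $\psi(0)=0$ and $\sin\psi=\kappa\sin\phi$, and set $d=\cos\psi$. Then $d$ extends to an elliptic function, given by $$d=1-\frac{\tfrac12\kappa^2}{\wp+\tfrac13},$$ where $\wp=\wp(\,\cdot\,;g_2,g_3)$ is the Weierstrass elliptic function with invariants $g_2=\tfrac43-\kappa^2$ and $g_3=\tfrac{8}{27}-\tfrac13\kappa^2$.
   Context: $F(a,b;c;z)$ denotes the Gauss hypergeometric function ${}_2F_1(a,b;c;z)$. $\wp(\cdot;g_2,g_3)$ is the Weierstrass function satisfying $(\wp')^2=4\wp^3-g_2\wp-g_3$ with a double pole at $0$. *)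

(* Defs.v *)
From Stdlib Require Import Reals Arith Factorial.
From Coquelicot Require Import Coquelicot.
Open Scope R_scope.

Fixpoint poch (a : R) (n : nat) : R :=
  match n with
  | O => 1
  | S m => poch a m * (a + INR m)
  end.

(* Gauss hypergeometric function 2F1(a,b;c;z) as its power series
   (used here only for 0 <= z < 1, where it converges). *)
Definition hyp2F1 (a b c z : R) : R :=
  Series (fun n => poch a n * poch b n / (poch c n * INR (fact n)) * z ^ n).

Definition u_of (kappa phi : R) : R :=
  RInt (fun t => hyp2F1 (1/4) (3/4) (1/2) (kappa ^ 2 * (sin t) ^ 2)) 0 phi.

Definition g2 (kappa : R) : R := 4/3 - kappa ^ 2.
Definition g3 (kappa : R) : R := 8/27 - kappa ^ 2 / 3.

(* Main.v *)
Require Import Defs.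
From Stdlib Require Import Reals Arith Factorial Lra Lia Psatz.
From Coquelicot Require Import Coquelicot.
Open Scope R_scope.


Lemma lim_ratio (a b : R) : 0 < b ->
  is_lim_seq (fun n => (INR n + a) / (INR n + b)) 1.
Proof.
  intros Hb.
  apply is_lim_seq_ext with (fun n => 1 + (a - b) * / (INR n + b)).
  { intros n. assert (0 <= INR n) by apply pos_INR. field. lra. }
  replace (Finite 1) with (Finite (1 + (a-b) * 0)) by (f_equal; ring).
  apply is_lim_seq_plus'. apply is_lim_seq_const.
  apply is_lim_seq_mult'. apply is_lim_seq_const.
  replace (Finite 0) with (Rbar_inv p_infty) by reflexivity.
  apply is_lim_seq_inv; [|discriminate].
  replace p_infty with (Rbar_plus p_infty b) by reflexivity.
  apply is_lim_seq_plus with p_infty b. apply is_lim_seq_INR. apply is_lim_seq_const.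
  reflexivity.
Qed.

Definition cbin (m : nat) : R := poch (1/2) m / INR (fact m).

Lemma poch_pos (a : R) (n : nat) : 0 < a -> 0 < poch a n.
Proof. intros Ha; induction n; simpl. lra. assert (0 <= INR n) by apply pos_INR. nra. Qed.

Lemma fact_posR n : 0 < INR (fact n).
Proof. apply lt_0_INR, lt_O_fact. Qed.

Lemma cbin_S m : cbin (S m) = cbin m * ((INR m + 1/2) / (INR m + 1)).
Proof.
  unfold cbin. simpl poch. rewrite fact_simpl, mult_INR, S_INR.
  assert (0 <= INR m) by apply pos_INR. pose proof (fact_posR m).
  field. lra.
Qed.

Lemma cbin_pos m : 0 < cbin m.
Proof. unfold cbin. apply Rdiv_lt_0_compat. apply poch_pos; lra. apply fact_posR. Qed.

Lemma CV_cbin : CV_radius cbin = 1.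
Proof.
  replace (Finite 1) with (Finite (/1)) by (f_equal; field).
  apply CV_radius_finite_DAlembert.
  - intros n. pose proof (cbin_pos n). lra.
  - lra.
  - apply is_lim_seq_ext with (fun n => (INR n + 1/2) / (INR n + 1)).
    { intros n. rewrite cbin_S. pose proof (cbin_pos n).
      assert (0 <= INR n) by apply pos_INR.
      replace (cbin n * ((INR n + 1 / 2) / (INR n + 1)) / cbin n) with ((INR n + 1 / 2) / (INR n + 1)) by (field; lra).
      rewrite Rabs_pos_eq. reflexivity. apply Rdiv_le_0_compat; lra. }
    apply lim_ratio; lra.
Qed.

Lemma cbin_in x : Rabs x < 1 -> Rbar_lt (Rabs x) (CV_radius cbin).
Proof. intros H; rewrite CV_cbin; exact H. Qed.

Lemma cbin_ode x : Rabs x < 1 ->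
  PSeries (PS_derive cbin) x * (1 - x) = PSeries cbin x / 2.
Proof.
  intros Hx.
  assert (E1 : PSeries (fun n => INR n * cbin n) x = x * PSeries (PS_derive cbin) x).
  { rewrite PSeries_decr_1_aux. 2: simpl; ring.
    f_equal. }
  assert (E2 : PSeries (fun n => INR n * cbin n) x =
     PSeries (PS_derive cbin) x + (-1/2) * PSeries cbin x).
  { rewrite <- PSeries_scal, <- PSeries_plus.
    apply PSeries_ext. intros n. unfold PS_plus, PS_scal, PS_derive.
    rewrite cbin_S, S_INR. assert (0 <= INR n) by apply pos_INR.
    change (plus ?a ?b) with (a + b). change (scal ?a ?b) with (a * b). field. lra.
    apply ex_pseries_derive, cbin_in, Hx.
    apply ex_pseries_scal. apply Rmult_comm. apply CV_radius_inside, cbin_in, Hx. }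
  lra.
Qed.

Lemma cbin_val x : Rabs x < 1 -> PSeries cbin x * sqrt (1 - x) = 1.
Proof.
  intros Hx.
  set (k := fun t => PSeries cbin t * sqrt (1 - t)).
  assert (Hd : forall t, Rabs t < 1 -> is_derive k t 0).
  { intros t Ht. unfold k.
    assert (Ht' : -1 < t < 1) by (apply Rabs_def2 in Ht; lra).
    assert (H1 : is_derive (fun t => sqrt (1 - t)) t (- / (2 * sqrt (1 - t)))).
    { auto_derive. lra. replace (1 + - t) with (1 - t) by ring. ring. }
    pose proof (is_derive_PSeries cbin t (cbin_in t Ht)) as H2.
    assert (H3 : is_derive k t (PSeries (PS_derive cbin) t * sqrt (1-t) + PSeries cbin t * (- / (2 * sqrt (1 - t))))).
    { apply (is_derive_mult (PSeries cbin) (fun t => sqrt(1-t))); auto. intros; apply Rmult_comm. }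
    replace 0 with (PSeries (PS_derive cbin) t * sqrt (1-t) + PSeries cbin t * (- / (2 * sqrt (1 - t)))).
    exact H3.
    pose proof (cbin_ode t Ht) as Ho.
    assert (Hs : 0 < sqrt (1 - t)) by (apply sqrt_lt_R0; lra).
    pose proof (sqrt_sqrt (1 - t)) as Hss.
    assert (Hg : PSeries cbin t = 2 * PSeries (PS_derive cbin) t * (sqrt (1-t) * sqrt (1-t))) by (rewrite Hss; lra).
    rewrite Hg. field. lra. }
  assert (H0 : k 0 = 1).
  { unfold k. rewrite PSeries_0. unfold cbin. simpl. rewrite Rminus_0_r, sqrt_1. field. }
  rewrite <- H0 at 2. change (k x = k 0).
  pose proof (Rabs_def2 _ _ Hx) as Hx'.
  destruct (Rtotal_order x 0) as [Hl|[He|Hg]].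
  - apply eq_is_derive; [|exact Hl]. intros t Ht. apply Hd. apply Rabs_def1; lra.
  - now rewrite He.
  - symmetry. apply eq_is_derive; [|exact Hg]. intros t Ht. apply Hd. apply Rabs_def1; lra.
Qed.

Definition acoef (n : nat) : R :=
  poch (1/4) n * poch (3/4) n / (poch (1/2) n * INR (fact n)).

Lemma acoef_cbin n : acoef n = cbin (2 * n).
Proof.
  induction n.
  - unfold acoef, cbin. simpl. field.
  - replace (2 * S n)%nat with (S (S (2 * n))) by lia.
    rewrite !cbin_S, <- IHn. unfold acoef. simpl poch.
    rewrite fact_simpl, mult_INR, S_INR, S_INR, mult_INR.
    assert (0 <= INR n) by apply pos_INR.
    pose proof (fact_posR n). pose proof (poch_pos (1/2) n ltac:(lra)).
    simpl INR. field. repeat split; lra.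
Qed.

Lemma CV_even : CV_radius (fun n => cbin (2 * n)) = 1.
Proof.
  replace (Finite 1) with (Finite (/1)) by (f_equal; field).
  apply CV_radius_finite_DAlembert.
  - intros n. pose proof (cbin_pos (2*n)). lra.
  - lra.
  - apply is_lim_seq_ext with (fun n => (INR n + 1/4) / (INR n + 1/2) * ((INR n + 3/4) / (INR n + 1))).
    { intros n. replace (2 * S n)%nat with (S (S (2 * n))) by lia.
      rewrite !cbin_S. pose proof (cbin_pos (2*n)).
      assert (0 <= INR n) by apply pos_INR.
      rewrite S_INR, mult_INR. simpl INR.
      rewrite Rabs_pos_eq. field. repeat split; lra.
      apply Rmult_le_pos. apply Rmult_le_pos. apply Rmult_le_pos. lra.
      apply Rdiv_le_0_compat; lra. apply Rdiv_le_0_compat; lra. 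
      left; apply Rinv_0_lt_compat; lra. }
    replace (Finite 1) with (Finite (1 * 1)) by (f_equal; ring).
    apply is_lim_seq_mult'; apply lim_ratio; lra.
Qed.

Lemma CV_odd : CV_radius (fun n => cbin (2 * n + 1)) = 1.
Proof.
  replace (Finite 1) with (Finite (/1)) by (f_equal; field).
  apply CV_radius_finite_DAlembert.
  - intros n. pose proof (cbin_pos (2*n+1)). lra.
  - lra.
  - apply is_lim_seq_ext with (fun n => (INR n + 3/4) / (INR n + 1) * ((INR n + 5/4) / (INR n + 3/2))).
    { intros n. replace (2 * S n + 1)%nat with (S (S (2 * n + 1))) by lia.
      rewrite !cbin_S. pose proof (cbin_pos (2*n+1)).
      assert (0 <= INR n) by apply pos_INR.
      rewrite S_INR, plus_INR, mult_INR. simpl INR.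
      rewrite Rabs_pos_eq. field. repeat split; lra.
      apply Rmult_le_pos. apply Rmult_le_pos. apply Rmult_le_pos. lra.
      apply Rdiv_le_0_compat; lra. apply Rdiv_le_0_compat; lra. 
      left; apply Rinv_0_lt_compat; lra. }
    replace (Finite 1) with (Finite (1 * 1)) by (f_equal; ring).
    apply is_lim_seq_mult'; apply lim_ratio; lra.
Qed.

Lemma hyp_closed s : -1 < s < 1 ->
  hyp2F1 (1/4) (3/4) (1/2) (s ^ 2) = (/ sqrt (1 + s) + / sqrt (1 - s)) / 2.
Proof.
  intros Hs.
  assert (Hs2 : Rabs (s ^ 2) < 1).
  { rewrite Rabs_pos_eq by (apply pow2_ge_0). nra. }
  assert (Ee : ex_pseries (fun n => cbin (2 * n)) (s ^ 2)).
  { apply CV_radius_inside. rewrite CV_even. exact Hs2. }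
  assert (Eo : ex_pseries (fun n => cbin (2 * n + 1)) (s ^ 2)).
  { apply CV_radius_inside. rewrite CV_odd. exact Hs2. }
  assert (Hh : hyp2F1 (1/4) (3/4) (1/2) (s ^ 2) = PSeries (fun n => cbin (2 * n)) (s ^ 2)).
  { unfold hyp2F1, PSeries. apply Series_ext. intros n.
    rewrite <- acoef_cbin; reflexivity. }
  pose proof (PSeries_odd_even cbin s Ee Eo) as H1.
  assert (Eo' : ex_pseries (fun n => cbin (2 * n + 1)) ((- s) ^ 2)) by (replace ((-s)^2) with (s^2) by ring; exact Eo).
  assert (Ee' : ex_pseries (fun n => cbin (2 * n)) ((- s) ^ 2)) by (replace ((-s)^2) with (s^2) by ring; exact Ee).
  pose proof (PSeries_odd_even cbin (-s) Ee' Eo') as H2.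
  replace ((-s)^2) with (s^2) in H2 by ring.
  assert (Hp : Rabs s < 1) by (apply Rabs_def1; lra).
  assert (Hm : Rabs (-s) < 1) by (apply Rabs_def1; lra).
  pose proof (cbin_val s Hp) as V1. pose proof (cbin_val (-s) Hm) as V2.
  assert (0 < sqrt (1 - s)) by (apply sqrt_lt_R0; lra).
  assert (0 < sqrt (1 - - s)) by (apply sqrt_lt_R0; lra).
  replace (1 + s) with (1 - - s) by ring.
  assert (A1 : PSeries cbin s = / sqrt (1 - s)) by (apply (Rmult_eq_reg_r (sqrt (1-s))); [rewrite V1, Rinv_l; lra | lra]).
  assert (A2 : PSeries cbin (-s) = / sqrt (1 - - s)) by (apply (Rmult_eq_reg_r (sqrt (1- -s))); [rewrite V2, Rinv_l; lra | lra]).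
  rewrite Hh. lra.
Qed.


Definition Fc (k t : R) : R := (/ sqrt (1 + k * sin t) + / sqrt (1 - k * sin t)) / 2.

Lemma ks_bound k t : 0 < k < 1 -> -1 < k * sin t < 1.
Proof.
  intros Hk. pose proof (SIN_bound t). split; nra.
Qed.

Lemma Fc_pos k t : 0 < k < 1 -> 0 < Fc k t.
Proof.
  intros Hk. pose proof (ks_bound k t Hk). unfold Fc.
  assert (0 < sqrt (1 + k * sin t)) by (apply sqrt_lt_R0; lra).
  assert (0 < sqrt (1 - k * sin t)) by (apply sqrt_lt_R0; lra).
  pose proof (Rinv_0_lt_compat _ H0). pose proof (Rinv_0_lt_compat _ H1). lra.
Qed.

Lemma Fc_derive k t : 0 < k < 1 -> ex_derive (Fc k) t.
Proof.
  intros Hk. pose proof (ks_bound k t Hk). unfold Fc.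
  auto_derive. repeat split; try lra;
  apply Rgt_not_eq, sqrt_lt_R0; lra.
Qed.

Lemma Fc_cont k t : 0 < k < 1 -> continuous (Fc k) t.
Proof. intros Hk. apply (ex_derive_continuous (K := R_AbsRing) (V := R_NormedModule)), Fc_derive, Hk. Qed.

Lemma u_of_eq k x : 0 < k < 1 -> u_of k x = RInt (Fc k) 0 x.
Proof.
  intros Hk. unfold u_of. apply RInt_ext. intros t _.
  replace (k ^ 2 * sin t ^ 2) with ((k * sin t) ^ 2) by ring.
  rewrite hyp_closed by (apply ks_bound; exact Hk). reflexivity.
Qed.

Lemma u_of_derive k x : 0 < k < 1 -> is_derive (u_of k) x (Fc k x).
Proof.
  intros Hk.
  apply is_derive_ext with (fun x => RInt (Fc k) 0 x).
  { intros t. symmetry. apply u_of_eq, Hk. }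
  apply is_derive_RInt with 0.
  - apply filter_forall. intros b. apply RInt_correct, ex_RInt_continuous.
    intros z _. apply Fc_cont, Hk.
  - apply Fc_cont, Hk.
Qed.

Lemma u_of_0 k : 0 < k < 1 -> u_of k 0 = 0.
Proof. intros Hk. rewrite u_of_eq by exact Hk. apply (RInt_point (V := R_CompleteNormedModule)). Qed.

Lemma u_of_incr k x y : 0 < k < 1 -> x < y -> u_of k x < u_of k y.
Proof.
  intros Hk Hxy.
  apply (incr_function (u_of k) m_infty p_infty (Fc k)); simpl; auto.
  intros; apply u_of_derive, Hk.
  intros; apply Fc_pos, Hk.
Qed.

Lemma u_of_inj k x y : 0 < k < 1 -> u_of k x = u_of k y -> x = y.
Proof.
  intros Hk E. destruct (Rtotal_order x y) as [H|[H|H]]; auto.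
  pose proof (u_of_incr k x y Hk H); lra.
  pose proof (u_of_incr k y x Hk H); lra.
Qed.

Lemma u_of_cont k x : 0 < k < 1 -> continuous (u_of k) x.
Proof. intros Hk. apply (ex_derive_continuous (K := R_AbsRing) (V := R_NormedModule)). eexists. apply u_of_derive, Hk. Qed.

Lemma Fc_even k t : Fc k (- t) = Fc k t.
Proof. unfold Fc. rewrite sin_neg. replace (1 + k * - sin t) with (1 - k * sin t) by ring.
  replace (1 - k * - sin t) with (1 + k * sin t) by ring. lra. Qed.

Lemma u_of_odd k x : 0 < k < 1 -> u_of k (- x) = - u_of k x.
Proof.
  intros Hk.
  set (g := fun x => u_of k x + u_of k (- x)).
  assert (Hd : forall t, is_derive g t 0).
  { intros t. unfold g.
    assert (H1 := u_of_derive k t Hk).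
    assert (H2 : is_derive (fun x => u_of k (- x)) t (- Fc k (- t))).
    { assert (H3 := u_of_derive k (- t) Hk).
      assert (H4 : is_derive (fun x : R => - x) t (-1)).
      { auto_derive; auto; ring. }
      pose proof (is_derive_comp (u_of k) (fun x => - x) t _ _ H3 H4) as H5.
      simpl in H5. change (scal (-1) (Fc k (-t))) with ((-1) * Fc k (-t)) in H5.
      replace (- Fc k (- t)) with ((-1) * Fc k (-t)) by ring. exact H5. }
    pose proof (is_derive_plus (K := R_AbsRing) (V := R_NormedModule) _ _ _ _ _ H1 H2) as H6.
    rewrite Fc_even in H6. change (plus ?a ?b) with (a + b) in H6.
    replace 0 with (Fc k t + - Fc k t) by ring. exact H6. }
  assert (g x = g 0).
  { destruct (Rtotal_order x 0) as [H|[H|H]].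
    apply eq_is_derive; auto. now rewrite H.
    symmetry; apply eq_is_derive; auto. }
  unfold g in H. rewrite Ropp_0, u_of_0 in H by exact Hk. lra.
Qed.


Definition rr (k y : R) : R := sqrt (1 - k ^ 2 * y ^ 2 / 4).
Definition ww (k y : R) : R := y * rr k y.
Definition Phi (k y : R) : R := asin (ww k y).
Definition HH (k y : R) : R := 1 - y ^ 2 + k ^ 2 * y ^ 4 / 4.

Lemma asin_derive x : -1 < x < 1 -> is_derive asin x (/ sqrt (1 - x ^ 2)).
Proof.
  intros Hx. apply is_derive_Reals.
  apply derive_pt_eq_1 with (derivable_pt_asin x Hx).
  rewrite derive_pt_asin. unfold Rsqr. replace (x * x) with (x ^ 2) by ring. field.
  apply Rgt_not_eq, sqrt_lt_R0. nra.
Qed.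

Section Facts.
Variables (k y : R) (Hk : 0 < k < 1) (Hy : -1 < y < 1).

Lemma ky_small : 0 <= k ^ 2 * y ^ 2 < 1.
Proof.
  assert (0 < k ^ 2 < 1) by (simpl; nra).
  assert (0 <= y ^ 2 < 1) by (simpl; nra).
  split. apply Rmult_le_pos; lra. nra.
Qed.

Lemma rr_sq : rr k y * rr k y = 1 - k ^ 2 * y ^ 2 / 4.
Proof. unfold rr. apply sqrt_sqrt. pose proof ky_small. lra. Qed.

Lemma rr_pos : 0 < rr k y.
Proof. unfold rr. apply sqrt_lt_R0. pose proof ky_small. lra. Qed.

Lemma ww_sq : 1 - ww k y ^ 2 = HH k y.
Proof. unfold ww, HH. pose proof rr_sq. simpl. simpl in H. replace (1 - y * rr k y * (y * rr k y * 1)) with (1 - y*y* (rr k y * rr k y)) by ring. rewrite H. field. Qed.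

Lemma HH_pos : 0 < HH k y.
Proof. unfold HH. pose proof ky_small. assert (0 <= y ^ 2 < 1) by (simpl; nra).
  replace (y ^ 4) with (y ^ 2 * y ^ 2) by ring. nra. Qed.

Lemma ww_bound : -1 < ww k y < 1.
Proof.
  pose proof ww_sq. pose proof HH_pos.
  assert (ww k y ^ 2 < 1) by lra. simpl in H1. split; nra.
Qed.

Lemma ww_derive : is_derive (ww k) y ((1 - k ^ 2 * y ^ 2 / 2) / rr k y).
Proof.
  pose proof rr_sq. pose proof rr_pos.
  unfold ww, rr. auto_derive.
  - nra.
  - replace (sqrt (1 + - (k * (k * 1) * (y * (y * 1)) * / 4))) with (rr k y)
      by (unfold rr; f_equal; field).
    apply (Rmult_eq_reg_r (rr k y)); [|lra].
    change (sqrt (1 - k ^ 2 * y ^ 2 / 4)) with (rr k y). field_simplify; [|lra..]. nra.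
Qed.

Lemma Fc_Phi : Fc k (Phi k y) = rr k y / (1 - k ^ 2 * y ^ 2 / 2).
Proof.
  pose proof rr_sq as H. pose proof rr_pos as H0. pose proof ky_small as H1.
  pose proof ww_bound as Hw.
  unfold Fc, Phi. rewrite sin_asin by lra.
  set (r := rr k y) in *.
  assert (Hp : 0 < r + k * y / 2 /\ 0 < r - k * y / 2).
  { assert (Hprod : 0 < (r + k * y / 2) * (r - k * y / 2)).
    { replace ((r + k * y / 2) * (r - k * y / 2)) with (r * r - k ^ 2 * y ^ 2 / 4) by (simpl; field).
      lra. }
    destruct (Rlt_or_le 0 (r + k * y / 2)); [split; auto; nra | nra]. }
  assert (E1 : 1 + k * ww k y = (r + k * y / 2) ^ 2).
  { unfold ww. fold r. simpl. simpl in H. nra. }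
  assert (E2 : 1 - k * ww k y = (r - k * y / 2) ^ 2).
  { unfold ww. fold r. simpl. simpl in H. nra. }
  rewrite E1, E2, !sqrt_pow2 by lra.
  assert (0 < 1 - k ^ 2 * y ^ 2 / 2) by lra.
  field_simplify; [| lra | lra ].
  replace (r ^ 2) with (r * r) by ring. rewrite H. field. lra.
Qed.

Lemma U_derive : is_derive (fun y => u_of k (Phi k y)) y (/ sqrt (HH k y)).
Proof.
  pose proof rr_sq as H. pose proof rr_pos as H0. pose proof ky_small as H1.
  pose proof ww_bound as Hw. pose proof HH_pos as HHp. pose proof ww_sq as Ew.
  assert (D1 : is_derive (Phi k) y ((1 - k ^ 2 * y ^ 2 / 2) / rr k y * / sqrt (1 - ww k y ^ 2))).
  { exact (is_derive_comp asin (ww k) y _ _ (asin_derive _ Hw) ww_derive). }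
  pose proof (is_derive_comp (u_of k) (Phi k) y _ _ (u_of_derive k (Phi k y) Hk) D1) as D2.
  change (scal ?a ?b) with (a * b) in D2.
  rewrite Fc_Phi, Ew in D2.
  assert (0 < sqrt (HH k y)) by (apply sqrt_lt_R0; lra).
  replace (/ sqrt (HH k y)) with
   ((1 - k ^ 2 * y ^ 2 / 2) / rr k y * / sqrt (HH k y) * (rr k y / (1 - k ^ 2 * y ^ 2 / 2))).
  exact D2. field. repeat split; lra.
Qed.

End Facts.


Lemma loc_right (h : R -> R) m : derivable_pt_lim h m 1 ->
  exists d, 0 < d /\ forall t, m < t < m + d -> h m < h t.
Proof.
  intros H. destruct (H (1/2) ltac:(lra)) as [d Hd].
  exists d. split. apply cond_pos. intros t Ht.
  specialize (Hd (t - m) ltac:(lra) ltac:(rewrite Rabs_pos_eq; lra)).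
  replace (m + (t - m)) with t in Hd by ring.
  apply Rabs_def2 in Hd. destruct Hd as [_ Hd].
  assert (0 < (h t - h m) / (t - m)) by lra.
  assert (0 < t - m) by lra.
  assert (0 < (h t - h m) / (t - m) * (t - m)) by nra.
  replace ((h t - h m) / (t - m) * (t - m)) with (h t - h m) in H2 by (field; lra). lra.
Qed.

Lemma loc_left (h : R -> R) m : derivable_pt_lim h m (-1) ->
  exists d, 0 < d /\ forall t, m - d < t < m -> h m < h t.
Proof.
  intros H. destruct (H (1/2) ltac:(lra)) as [d Hd].
  exists d. split. apply cond_pos. intros t Ht.
  specialize (Hd (t - m) ltac:(lra) ltac:(rewrite Rabs_left; lra)).
  replace (m + (t - m)) with t in Hd by ring.
  apply Rabs_def2 in Hd. destruct Hd as [Hd _].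
  assert ((h t - h m) / (t - m) < 0) by lra.
  assert (0 < m - t) by lra.
  assert ((h t - h m) / (t - m) * (m - t) < 0) by nra.
  replace ((h t - h m) / (t - m) * (m - t)) with (h m - h t) in H2 by (field; lra). lra.
Qed.

Lemma darb1 (h h' : R -> R) a b : a < b ->
  (forall x, a <= x <= b -> derivable_pt_lim h x (h' x)) ->
  (forall x, a <= x <= b -> h' x = 1 \/ h' x = -1) ->
  h' a = 1 -> h' b = -1 -> False.
Proof.
  intros Hab Hd Hv Ha Hb.
  destruct (continuity_ab_maj h a b ltac:(lra)) as [m [Hm Hmab]].
  { intros c Hc. apply derivable_continuous_pt. exists (h' c). apply Hd, Hc. }
  destruct (Hv m Hmab) as [E|E].
  - assert (m < b). { destruct (Req_dec m b). subst. lra. lra. }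
    destruct (loc_right h m) as [d [Hd0 Hd1]]. rewrite <- E. apply Hd, Hmab.
    set (t := Rmin b (m + d/2)).
    assert (m < t <= b). { unfold t. split. apply Rmin_glb_lt; lra. apply Rmin_l. }
    assert (t < m + d). { unfold t. apply Rle_lt_trans with (m + d/2). apply Rmin_r. lra. }
    assert (T1 : m < t < m + d) by lra. assert (T2 : a <= t <= b) by lra.
    specialize (Hd1 t T1). specialize (Hm t T2). lra.
  - assert (a < m). { destruct (Req_dec m a). subst. lra. lra. }
    destruct (loc_left h m) as [d [Hd0 Hd1]]. rewrite <- E. apply Hd, Hmab.
    set (t := Rmax a (m - d/2)).
    assert (a <= t < m). { unfold t. split. apply Rmax_l. apply Rmax_lub_lt; lra. }
    assert (m - d < t). { unfold t. apply Rlt_le_trans with (m - d/2). lra. apply Rmax_r. }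
    assert (T1 : m - d < t < m) by lra. assert (T2 : a <= t <= b) by lra.
    specialize (Hd1 t T1). specialize (Hm t T2). lra.
Qed.

Lemma darboux (h h' : R -> R) a b : a < b ->
  (forall x, a <= x <= b -> derivable_pt_lim h x (h' x)) ->
  (forall x, a <= x <= b -> h' x = 1 \/ h' x = -1) ->
  h' a = h' b.
Proof.
  intros Hab Hd Hv.
  destruct (Hv a ltac:(lra)) as [Ea|Ea]; destruct (Hv b ltac:(lra)) as [Eb|Eb]; try lra.
  - exfalso; exact (darb1 h h' a b Hab Hd Hv Ea Eb).
  - exfalso. apply (darb1 (- h)%F (fun x => - h' x) a b Hab).
    + intros x Hx. apply derivable_pt_lim_opp, Hd, Hx.
    + intros x Hx. destruct (Hv x Hx); [right|left]; lra.
    + lra.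
    + lra.
Qed.

Lemma const_lim0 (g : R -> R) eta : 0 < eta ->
  (forall u v, 0 < u < eta -> 0 < v < eta -> g u = g v) ->
  (forall e, 0 < e -> exists d, 0 < d /\ forall v, 0 < v < d -> Rabs (g v) < e) ->
  forall u, 0 < u < eta -> g u = 0.
Proof.
  intros Heta Hc Hl u Hu.
  destruct (Req_dec (g u) 0) as [E|E]; auto. exfalso.
  assert (Hp : 0 < Rabs (g u)) by (apply Rabs_pos_lt; exact E).
  destruct (Hl _ Hp) as [d [Hd Hv]].
  set (v := Rmin (d / 2) (eta / 2)).
  assert (0 < v < d /\ v < eta). { unfold v. pose proof (Rmin_l (d/2) (eta/2)). pose proof (Rmin_r (d/2) (eta/2)).
    assert (0 < Rmin (d / 2) (eta / 2)) by (apply Rmin_glb_lt; lra). lra. }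
  assert (V1 : 0 < v < d) by lra. assert (V2 : 0 < v < eta) by lra.
  specialize (Hv v V1). rewrite (Hc u v Hu V2) in Hv. lra.
Qed.


Definition U (k y : R) : R := u_of k (Phi k y).

Lemma U_0 k : 0 < k < 1 -> U k 0 = 0.
Proof. intros Hk. unfold U, Phi, ww. rewrite Rmult_0_l, asin_0. apply u_of_0, Hk. Qed.

Lemma U_pos k y : 0 < k < 1 -> 0 < y < 1 -> 0 < U k y.
Proof.
  intros Hk Hy. rewrite <- (U_0 k Hk).
  apply (incr_function (U k) (-1) 1 (fun y => / sqrt (HH k y))); simpl; try lra.
  - intros x H1 H2. apply U_derive; auto.
  - intros x H1 H2. apply Rinv_0_lt_compat, sqrt_lt_R0, HH_pos; auto.
Qed.

Lemma U_cont0 k : 0 < k < 1 -> forall e, 0 < e ->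
  exists r, 0 < r /\ forall y, Rabs y < r -> Rabs (U k y) < e.
Proof.
  intros Hk e He.
  assert (Hc : continuity_pt (U k) 0).
  { apply continuity_pt_filterlim.
    apply (ex_derive_continuous (K := R_AbsRing) (V := R_NormedModule)).
    eexists. apply U_derive; auto; lra. }
  destruct (Hc e He) as [a [Ha Hf]].
  exists a. split. exact Ha. intros y Hy.
  destruct (Req_dec y 0) as [E|E].
  - subst. rewrite U_0 by exact Hk. rewrite Rabs_R0. exact He.
  - specialize (Hf y). simpl in Hf. unfold R_dist in Hf. rewrite U_0, Rminus_0_r, Rminus_0_r in Hf by exact Hk.
    apply Hf. split. unfold D_x, no_cond. split; auto. exact Hy.
Qed.

Lemma const_deriv (g : R -> R) eta :
  (forall x, 0 < x < eta -> is_derive g x 0) ->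
  forall u v, 0 < u < eta -> 0 < v < eta -> g u = g v.
Proof.
  intros Hd u v Hu Hv.
  destruct (Rtotal_order u v) as [H|[H|H]].
  - apply eq_is_derive; auto. intros t Ht. apply Hd. lra.
  - now subst.
  - symmetry. apply eq_is_derive; auto. intros t Ht. apply Hd. lra.
Qed.

Lemma sq_pm1 x : x ^ 2 = 1 -> x = 1 \/ x = -1.
Proof.
  intros H. assert ((x - 1) * (x + 1) = 0) by (simpl in H; nra).
  apply Rmult_integral in H0. destruct H0; [left|right]; lra.
Qed.

Lemma core k (Hk : 0 < k < 1) (phi P : R -> R) delta eps
  (Hdelta : 0 < delta) (Hinv : forall u, Rabs u < delta -> u_of k (phi u) = u)
  (Heps : 0 < eps)
  (HP : forall u, 0 < u < eps -> ex_derive P u /\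
          (Derive P u) ^ 2 = 4 * (P u) ^ 3 - g2 k * P u - g3 k)
  (Hinf : forall M, exists eta, 0 < eta /\ forall u, 0 < u < eta -> M < P u) :
  exists eta, 0 < eta /\ forall u, 0 < u < eta ->
    4 < P u + 1/3 /\ sin (phi u) = ww k (/ sqrt (P u + 1/3)).
Proof.
  destruct (Hinf 4) as [e1 [He1 H1]].
  set (eta := Rmin e1 (Rmin eps delta)).
  assert (Heta : 0 < eta) by (apply Rmin_glb_lt; [lra | apply Rmin_glb_lt; lra]).
  assert (Hin : forall u, 0 < u < eta -> 0 < u < e1 /\ 0 < u < eps /\ Rabs u < delta).
  { intros u Hu. pose proof (Rmin_l e1 (Rmin eps delta)). pose proof (Rmin_r e1 (Rmin eps delta)).
    pose proof (Rmin_l eps delta). pose proof (Rmin_r eps delta). fold eta in H, H0.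
    rewrite Rabs_pos_eq by lra. lra. }
  exists eta. split. exact Heta.
  set (b := fun u => / sqrt (P u + 1/3)).
  set (b' := fun u => - Derive P u / (2 * (P u + 1/3) * sqrt (P u + 1/3))).
  assert (HX : forall u, 0 < u < eta -> 4 < P u + 1/3).
  { intros u Hu. destruct (Hin u Hu) as [A _]. specialize (H1 u A). lra. }
  assert (Hbr : forall u, 0 < u < eta -> 0 < b u < 1/2).
  { intros u Hu. specialize (HX u Hu). unfold b.
    assert (2 < sqrt (P u + 1/3)).
    { rewrite <- sqrt_Rsqr with 2 by lra. apply sqrt_lt_1. unfold Rsqr; lra. lra. unfold Rsqr; lra. }
    split. apply Rinv_0_lt_compat; lra.
    replace (1/2) with (/2) by field. apply Rinv_lt_contravar; lra. }
  assert (Hbd : forall u, 0 < u < eta -> is_derive b u (b' u)).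
  { intros u Hu. specialize (HX u Hu). destruct (Hin u Hu) as [_ [A _]].
    destruct (HP u A) as [HPd _].
    unfold b, b'. auto_derive.
    - split. exact HPd. split. lra. split; auto. apply Rgt_not_eq, sqrt_lt_R0. lra.
    - change (Derive (fun x : R => P x) u) with (Derive P u).
      assert (0 < sqrt (P u + 1/3)) by (apply sqrt_lt_R0; lra).
      rewrite sqrt_sqrt by lra. field. split; lra. }
  assert (Hb2 : forall u, 0 < u < eta -> (b' u) ^ 2 = HH k (b u)).
  { intros u Hu. specialize (HX u Hu). destruct (Hin u Hu) as [_ [A _]].
    destruct (HP u A) as [_ HD].
    unfold b, b', HH.
    set (s := sqrt (P u + 1/3)).
    assert (Hs : 0 < s) by (apply sqrt_lt_R0; lra).
    assert (Hss : s * s = P u + 1/3) by (apply sqrt_sqrt; lra).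
    assert (EP : P u = s * s - 1/3) by lra.
    replace ((- Derive P u / (2 * (P u + 1 / 3) * s)) ^ 2) with
      (Derive P u ^ 2 / (4 * (s * s) ^ 2 * (s * s))) by (rewrite <- Hss; field; lra).
    rewrite HD, EP. unfold g2, g3. field. lra. }
  set (h := fun u => U k (b u)).
  set (h' := fun u => b' u * / sqrt (HH k (b u))).
  assert (Hhd : forall u, 0 < u < eta -> is_derive h u (h' u)).
  { intros u Hu. pose proof (Hbr u Hu).
    pose proof (is_derive_comp (U k) b u _ _ (U_derive k (b u) Hk ltac:(lra)) (Hbd u Hu)) as D.
    exact D. }
  assert (Hh1 : forall u, 0 < u < eta -> h' u = 1 \/ h' u = -1).
  { intros u Hu. apply sq_pm1. pose proof (Hbr u Hu).
    assert (0 < HH k (b u)) by (apply HH_pos; auto; lra).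
    unfold h'. rewrite Rpow_mult_distr, Hb2 by exact Hu.
    rewrite <- Rinv_pow by (apply Rgt_not_eq, sqrt_lt_R0; lra).
    rewrite pow2_sqrt by lra. field. lra. }
  assert (Hconst : forall x y, 0 < x < eta -> 0 < y < eta -> h' x = h' y).
  { assert (G : forall x y, 0 < x < eta -> 0 < y < eta -> x < y -> h' x = h' y).
    { intros x y Hx Hy Hxy. apply darboux with h; auto.
      intros t Ht. apply is_derive_Reals, Hhd. lra.
      intros t Ht. apply Hh1. lra. }
    intros x y Hx Hy. destruct (Rtotal_order x y) as [H|[H|H]].
    apply G; auto. now subst. symmetry; apply G; auto. }
  assert (Hlim : forall e, 0 < e -> exists d, 0 < d /\ forall v, 0 < v < d -> Rabs (h v) < e).
  { intros e He. destruct (U_cont0 k Hk e He) as [r [Hr Hr']].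
    destruct (Hinf (/ (r * r))) as [d1 [Hd1 Hd1']].
    exists (Rmin d1 eta). split. apply Rmin_glb_lt; lra.
    intros v Hv. pose proof (Rmin_l d1 eta). pose proof (Rmin_r d1 eta).
    assert (Hv1 : 0 < v < d1) by lra. assert (Hv2 : 0 < v < eta) by lra.
    specialize (Hd1' v Hv1). pose proof (Hbr v Hv2). pose proof (HX v Hv2).
    unfold h. apply Hr'. rewrite Rabs_pos_eq by lra.
    assert (Hb2' : b v * b v = / (P v + 1/3)).
    { unfold b. rewrite <- Rinv_mult. rewrite sqrt_sqrt by lra. reflexivity. }
    assert (0 < r * r) by nra.
    assert (/ (P v + 1/3) < r * r).
    { rewrite <- (Rinv_inv (r * r)). apply Rinv_lt_contravar. 
      apply Rmult_lt_0_compat. apply Rinv_0_lt_compat; lra. lra. lra. }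
    nra. }
  assert (Hmid : 0 < eta / 2 < eta) by lra.
  assert (Hhu : forall u, 0 < u < eta -> h u = u).
  { destruct (Hh1 _ Hmid) as [E|E].
    - intros u Hu.
      assert (Z : h u - u = 0).
      { apply (const_lim0 (fun u => h u - u) eta Heta); auto.
        + apply const_deriv. intros x Hx.
          replace 0 with (h' x - 1) by (rewrite (Hconst x (eta/2) Hx Hmid); lra).
          apply (is_derive_minus (K := R_AbsRing) (V := R_NormedModule)). apply Hhd, Hx. auto_derive; auto.
        + intros e He. destruct (Hlim (e/2) ltac:(lra)) as [d [Hd Hd']].
          exists (Rmin d (e/2)). split. apply Rmin_glb_lt; lra.
          intros v Hv. pose proof (Rmin_l d (e/2)). pose proof (Rmin_r d (e/2)).
          assert (Hv1 : 0 < v < d) by lra. specialize (Hd' v Hv1).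
          apply Rabs_def2 in Hd'. apply Rabs_def1; lra. }
      lra.
    - exfalso.
      assert (Z : h (eta/2) + eta/2 = 0).
      { apply (const_lim0 (fun u => h u + u) eta Heta); auto.
        + apply const_deriv. intros x Hx.
          replace 0 with (h' x + 1) by (rewrite (Hconst x (eta/2) Hx Hmid); lra).
          apply (is_derive_plus (K := R_AbsRing) (V := R_NormedModule)). apply Hhd, Hx. auto_derive; auto.
        + intros e He. destruct (Hlim (e/2) ltac:(lra)) as [d [Hd Hd']].
          exists (Rmin d (e/2)). split. apply Rmin_glb_lt; lra.
          intros v Hv. pose proof (Rmin_l d (e/2)). pose proof (Rmin_r d (e/2)).
          assert (Hv1 : 0 < v < d) by lra. specialize (Hd' v Hv1).
          apply Rabs_def2 in Hd'. apply Rabs_def1; lra. }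
      assert (0 < h (eta/2)).
      { unfold h. apply U_pos; auto. pose proof (Hbr _ Hmid). lra. }
      lra. }
  intros u Hu. split. apply HX, Hu.
  destruct (Hin u Hu) as [_ [_ Hd]].
  assert (E : Phi k (b u) = phi u).
  { apply (u_of_inj k _ _ Hk). fold (U k (b u)). change (U k (b u)) with (h u).
    rewrite Hhu, Hinv; auto. }
  rewrite <- E. unfold Phi. pose proof (Hbr u Hu).
  rewrite sin_asin. reflexivity.
  pose proof (ww_bound k (b u) Hk ltac:(lra)). lra.
Qed.


Lemma ball_R (x y d : R) : Rabs (y - x) < d -> ball x d y.
Proof. intros H. exact H. Qed.

Lemma cubic_neg k p : 0 < k < 1 -> p <= -1 -> 4 * p ^ 3 - g2 k * p - g3 k < 0.
Proof.
  intros Hk Hp. unfold g2, g3. simpl.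
  assert (p * (p * p - 1) <= 0) by nra.
  assert (k * k * (1/3 + p) < 0) by nra.
  nra.
Qed.

Lemma pole_inf k (P : R -> R) eps c : 0 < k < 1 -> 0 < eps ->
  (forall u, 0 < Rabs u < eps -> ex_derive P u /\
          (Derive P u) ^ 2 = 4 * (P u) ^ 3 - g2 k * P u - g3 k) ->
  c <> 0 -> is_lim (fun u => u ^ 2 * P u) 0 (Finite c) ->
  forall M, exists eta, 0 < eta /\ forall u, 0 < Rabs u < eta -> M < P u.
Proof.
  intros Hk Heps HP Hc Hl.
  apply is_lim_spec in Hl.
  assert (Hc2 : 0 < Rabs c / 2) by (pose proof (Rabs_pos_lt c Hc); lra).
  destruct (Hl (mkposreal _ Hc2)) as [d Hd]. simpl in Hd.
  assert (Hd' : forall u, 0 < Rabs u < d -> Rabs (u ^ 2 * P u - c) < Rabs c / 2).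
  { intros u Hu. apply Hd. apply ball_R. rewrite Rminus_0_r. lra.
    intros E. subst. rewrite Rabs_R0 in Hu. lra. }
  assert (Hcp : 0 < c).
  { destruct (Rlt_or_le 0 c) as [H|H]; auto. exfalso.
    assert (Hc' : c < 0) by lra.
    set (u := Rmin (Rmin d eps) (Rmin 1 (Rabs c / 2)) / 2).
    assert (Hu : 0 < u /\ u < d /\ u < eps /\ u < 1 /\ u < Rabs c / 2).
    { unfold u. pose proof (Rmin_l (Rmin d eps) (Rmin 1 (Rabs c / 2))).
      pose proof (Rmin_r (Rmin d eps) (Rmin 1 (Rabs c / 2))).
      pose proof (Rmin_l d eps). pose proof (Rmin_r d eps).
      pose proof (Rmin_l 1 (Rabs c / 2)). pose proof (Rmin_r 1 (Rabs c / 2)).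
      assert (0 < Rmin (Rmin d eps) (Rmin 1 (Rabs c / 2))).
      { apply Rmin_glb_lt; apply Rmin_glb_lt; lra || (destruct d; simpl; lra). }
      lra. }
    assert (Hau : 0 < Rabs u < d) by (rewrite Rabs_pos_eq; lra).
    specialize (Hd' u Hau). rewrite (Rabs_left c) in Hd' by lra. apply Rabs_def2 in Hd'.
    assert (Hpu : P u <= -1).
    { assert (Hu2 : u ^ 2 < - c / 2).
      { rewrite (Rabs_left c) in Hu by lra. assert (u * u < u * 1) by (apply Rmult_lt_compat_l; lra). simpl. lra. }
      destruct (Rle_lt_dec (P u) (-1)) as [Hle|Hlt]; auto. exfalso.
      assert (0 < (P u + 1) * u ^ 2) by (apply Rmult_lt_0_compat; [lra | simpl; nra]).
      assert ((P u + 1) * u ^ 2 = u ^ 2 * P u + u ^ 2) by ring. lra. }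
    assert (Hau2 : 0 < Rabs u < eps) by (rewrite Rabs_pos_eq; lra).
    destruct (HP u Hau2) as [_ HD].
    pose proof (cubic_neg k (P u) Hk Hpu). pose proof (pow2_ge_0 (Derive P u)). lra. }
  intros M.
  set (m := Rabs M + 1).
  assert (Hm : 0 < m) by (unfold m; pose proof (Rabs_pos M); lra).
  exists (Rmin (Rmin d 1) (c / (2 * m))). split.
  { apply Rmin_glb_lt. apply Rmin_glb_lt. destruct d; simpl; lra. lra.
    apply Rdiv_lt_0_compat; lra. }
  intros u Hu.
  pose proof (Rmin_l (Rmin d 1) (c / (2 * m))). pose proof (Rmin_r (Rmin d 1) (c / (2 * m))).
  pose proof (Rmin_l d 1). pose proof (Rmin_r d 1).
  assert (Hau : 0 < Rabs u < d) by lra.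
  specialize (Hd' u Hau). rewrite (Rabs_pos_eq c) in Hd' by lra. apply Rabs_def2 in Hd'.
  assert (Hu2 : u ^ 2 < Rabs u) by (rewrite <- (pow2_abs u); simpl; nra).
  assert (Hu2' : 0 < u ^ 2) by (rewrite <- (pow2_abs u); simpl; nra).
  assert (m * u ^ 2 < c / 2).
  { assert (u ^ 2 < c / (2 * m)) by lra.
    apply (Rmult_lt_compat_l m) in H3; auto.
    replace (m * (c / (2 * m))) with (c / 2) in H3 by (field; lra). exact H3. }
  assert (u ^ 2 * (P u - m) > 0) by nra.
  assert (P u - m > 0) by nra.
  unfold m in H5. pose proof (Rle_abs M). lra.
Qed.

Lemma final_alg k X s ps : 0 < k < 1 -> 4 < X ->
  s ^ 2 = (ww k (/ sqrt X)) ^ 2 -> sin ps = k * s -> 0 < cos ps ->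
  cos ps = 1 - (k ^ 2 / 2) / X.
Proof.
  intros Hk HX Hs Hsin Hcos.
  set (y := / sqrt X) in *.
  assert (Hq : 0 < sqrt X) by (apply sqrt_lt_R0; lra).
  assert (Hy2 : y * y = / X).
  { unfold y. rewrite <- Rinv_mult, sqrt_sqrt by lra. reflexivity. }
  assert (Hy : 0 < y < 1).
  { assert (0 < y) by (apply Rinv_0_lt_compat; lra).
    assert (/ X < 1/4) by (apply Rinv_lt_contravar in HX; [lra | lra]). nra. }
  pose proof (rr_sq k y Hk ltac:(lra)) as Hr.
  assert (Hw : (ww k y) ^ 2 = y * y * (1 - k ^ 2 * (y * y) / 4)).
  { unfold ww. replace (1 - k ^ 2 * (y * y) / 4) with (rr k y * rr k y) by (rewrite Hr; field). ring. }
  pose proof (sin2_cos2 ps) as Hsc. unfold Rsqr in Hsc.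
  rewrite Hsin in Hsc.
  set (t := 1 - k ^ 2 / 2 / X).
  assert (Ht : t = 1 - k ^ 2 * (y * y) / 2) by (unfold t; rewrite Hy2; field; lra).
  assert (Htp : 0 < t).
  { rewrite Ht. assert (k ^ 2 < 1) by (simpl; nra). assert (0 <= k ^ 2) by (apply pow2_ge_0). nra. }
  assert (Hc2 : cos ps * cos ps = t * t).
  { rewrite Ht. simpl in Hw, Hs. simpl.
    assert (E : k * s * (k * s) = k * k * (s * (s * 1))) by ring.
    rewrite Hs, Hw in E. nra. }
  assert ((cos ps - t) * (cos ps + t) = 0) by nra.
  apply Rmult_integral in H. destruct H; lra.
Qed.

Theorem theorem4 (kappa : R) (Hk : 0 < kappa < 1)
  (phi psi P : R -> R) (delta eps : R)
  (Hdelta : 0 < delta)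
  (Hphi0 : phi 0 = 0)
  (Hinv : forall u, Rabs u < delta -> u_of kappa (phi u) = u)
  (Hpsi0 : psi 0 = 0)
  (Hpsic : forall u, Rabs u < delta -> continuous psi u)
  (Hsin : forall u, Rabs u < delta -> sin (psi u) = kappa * sin (phi u))
  (Heps : 0 < eps)
  (HP : forall u, 0 < Rabs u < eps ->
          ex_derive P u /\
          (Derive P u) ^ 2 = 4 * (P u) ^ 3 - g2 kappa * P u - g3 kappa)
  (Hpole : exists c : R, c <> 0 /\ is_lim (fun u => u ^ 2 * P u) 0 (Finite c)) :
  exists eta : R, 0 < eta /\
    forall u, 0 < Rabs u < eta ->
      cos (psi u) = 1 - (kappa ^ 2 / 2) / (P u + 1/3).
Proof.
  destruct Hpole as [c [Hc Hl]].
  pose proof (pole_inf kappa P eps c Hk Heps HP Hc Hl) as Hinf.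
  destruct (core kappa Hk phi P delta eps Hdelta Hinv Heps) as [eR [HeR HR]].
  { intros u Hu. apply HP. rewrite Rabs_pos_eq; lra. }
  { intros M. destruct (Hinf M) as [e [He He']]. exists e. split; auto.
    intros u Hu. apply He'. rewrite Rabs_pos_eq; lra. }
  destruct (core kappa Hk (fun u => - phi (- u)) (fun u => P (- u)) delta eps Hdelta) as [eL [HeL HL]].
  { intros u Hu. rewrite u_of_odd by exact Hk. rewrite Hinv. ring. rewrite Rabs_Ropp; exact Hu. }
  { exact Heps. }
  { intros u Hu. assert (Hu' : 0 < Rabs (- u) < eps) by (rewrite Rabs_Ropp, Rabs_pos_eq; lra).
    destruct (HP (- u) Hu') as [Hd HD].
    assert (Hid : is_derive (fun x : R => - x) u (-1)) by (auto_derive; auto; ring).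
    assert (Ex : ex_derive (fun x => P (- x)) u).
    { apply (ex_derive_comp P (fun x => - x)). exact Hd. eexists; exact Hid. }
    split. exact Ex.
    rewrite (Derive_comp P (fun x => - x)) by (auto; eexists; exact Hid).
    rewrite (is_derive_unique _ _ _ Hid). rewrite <- HD. ring. }
  { intros M. destruct (Hinf M) as [e [He He']]. exists e. split; auto.
    intros u Hu. apply He'. rewrite Rabs_Ropp, Rabs_pos_eq; lra. }
  assert (Hpc : continuity_pt psi 0).
  { apply continuity_pt_filterlim. apply Hpsic. rewrite Rabs_R0; exact Hdelta. }
  destruct (Hpc (PI / 2) ltac:(pose proof PI_RGT_0; lra)) as [a [Ha Ha']].
  set (eta := Rmin (Rmin eR eL) (Rmin a delta)).
  assert (Heta : 0 < eta).
  { apply Rmin_glb_lt; apply Rmin_glb_lt; lra. }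
  exists eta. split. exact Heta.
  intros u Hu.
  pose proof (Rmin_l (Rmin eR eL) (Rmin a delta)). pose proof (Rmin_r (Rmin eR eL) (Rmin a delta)).
  pose proof (Rmin_l eR eL). pose proof (Rmin_r eR eL).
  pose proof (Rmin_l a delta). pose proof (Rmin_r a delta). fold eta in H, H0.
  assert (Hud : Rabs u < delta) by lra.
  assert (Hcos : 0 < cos (psi u)).
  { assert (Hu0 : u <> 0) by (intros E; subst; rewrite Rabs_R0 in Hu; lra).
    specialize (Ha' u). simpl in Ha'. unfold R_dist in Ha'.
    rewrite Hpsi0, !Rminus_0_r in Ha'.
    assert (Hb : Rabs (psi u) < PI / 2).
    { apply Ha'. split. unfold D_x, no_cond. split; auto. lra. }
    apply Rabs_def2 in Hb. apply cos_gt_0; lra. }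
  destruct (Rlt_or_le 0 u) as [Hpos|Hneg].
  - rewrite Rabs_pos_eq in Hu by lra.
    destruct (HR u ltac:(lra)) as [HX Hs].
    apply (final_alg kappa (P u + 1/3) (sin (phi u))); auto.
    rewrite Hs; reflexivity.
  - assert (Hneg' : u < 0). { destruct (Req_dec u 0); [subst; rewrite Rabs_R0 in Hu; lra | lra]. }
    rewrite Rabs_left in Hu by lra.
    destruct (HL (- u) ltac:(lra)) as [HX Hs].
    rewrite Ropp_involutive in HX, Hs.
    apply (final_alg kappa (P u + 1/3) (sin (phi u))); auto.
    rewrite <- Hs, sin_neg. ring.
Qed.
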